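(* Assume (A1) and (A2), and let $\sigma,\sigma'>0$, $\bar Z\in\mathcal{Z}^\sigma_\star$, and $\bar H\in\mathcal{C}(\bar Z)$, with $\bar Z'$ and $\bar H'$ as defined in the context. Then $$\Pi_+'(\bar Z';\bar H')=\Pi_+'(\bar Z;\bar H),\qquad \Pi_-'(\bar Z';\bar H')=\frac{\sigma'}{\sigma}\,\Pi_-'(\bar Z;\bar H).$$
   Context: Notation: $\mathbb{S}^n$ is the space of real symmetric $n\times n$ matrices with $\langle A,B\rangle=\mathrm{tr}(AB)$. $\Pi_+$, $\Pi_-$ are the orthogonal projections onto the PSD and NSD cones, and $F'(Z;H):=\lim_{t\downarrow0}(F(Z+tH)-F(Z))/t$ for $F\in\{\Pi_+,\Pi_-\}$. SDP data $C,A_1,\dots,A_m\in\mathbb{S}^n$, $b\in\mathbb{R}^m$ define $\mathcal{A}X:=(\langle A_i,X\rangle)_i$ and $\mathcal{A}^*y:=\sum_iy_iA_i$. A KKT point is $(X,y,S)$ with $\mathcal{A}X=b$, $\mathcal{A}^*y+S=C$, $X,S\succeq0$, $\langle X,S\rangle=0$. $\mathcal{X}_\star$, $\mathcal{S}_\star$ are the sets of $X$, resp. $S$, in KKT points. (A1) $\mathcal{A}$ is surjective. (A2) Some KKT point $(X_{sc},y_{sc},S_{sc})$ has $\mathrm{rank}X_{sc}+\mathrm{rank}S_{sc}=n$. Let $\mathcal{P}:=\mathcal{A}^*(\mathcal{A}\mathcal{A}^* )^{-1}\mathcal{A}$ and $\mathcal{P}^\perp:=\mathrm{Id}-\mathcal{P}$.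 For $\tau>0$ let $\mathcal{Z}^\tau_\star:=\{X-\tau S:X\in\mathcal{X}_\star,S\in\mathcal{S}_\star\}$. For such $\bar Z$ let $\delta'(\bar Z;H):=-\mathcal{P}\Pi_+'(\bar Z;H)-\mathcal{P}^\perp\Pi_-'(\bar Z;H)$ and $\mathcal{C}(\bar Z):=\{H:\delta'(\bar Z;H)=0\}$. Given $\bar Z\in\mathcal{Z}^\sigma_\star$, let $\bar X:=\Pi_+(\bar Z)$ and $\bar S:=-\sigma^{-1}\Pi_-(\bar Z)$, and define $$\bar Z':=\bar X-\sigma'\bar S,\qquad \bar H':=\Pi_+'(\bar Z;\bar H)+\frac{\sigma'}{\sigma}\Pi_-'(\bar Z;\bar H).$$ *)

(* Defs.v *)
From HB Require Import structures.
From mathcomp Require Import all_boot all_order all_algebra.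
From mathcomp Require Import all_classical all_reals all_analysis.
Set Implicit Arguments. Unset Strict Implicit. Unset Printing Implicit Defensive.
Import Order.TTheory GRing.Theory Num.Theory.
Import numFieldNormedType.Exports.
Local Open Scope classical_set_scope.
Local Open Scope ring_scope.

Section SDPDefs.
Variables (R : realType) (n m : nat).

Definition symmx (X : 'M[R]_n) : Prop := X^T = X.

Definition psd (X : 'M[R]_n) : Prop :=
  symmx X /\ forall v : 'cV[R]_n, 0 <= (v^T *m X *m v) 0 0.
Definition nsd (X : 'M[R]_n) : Prop := psd (- X).

Definition mxdot (A B : 'M[R]_n) : R := \tr (A *m B).
Definition frob2 (A : 'M[R]_n) : R := \tr (A^T *m A).

Definition is_proj (K : set 'M[R]_n) (Z X : 'M[R]_n) : Prop :=
  K X /\ forall Y, K Y -> frob2 (Z - X) <= frob2 (Z - Y).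

Definition PiP (Z : 'M[R]_n) : 'M[R]_n := xget 0 [set X | is_proj psd Z X].
Definition PiN (Z : 'M[R]_n) : 'M[R]_n := xget 0 [set X | is_proj nsd Z X].

(* D is the directional derivative F'(Z;H) = lim_{t -> 0+} (F(Z+tH)-F(Z))/t
   (entrywise convergence, equivalent to convergence in any norm) *)
Definition is_dirder (F : 'M[R]_n -> 'M[R]_n) (Z H D : 'M[R]_n) : Prop :=
  forall i j : 'I_n,
    (t^-1 *: (F (Z + t *: H) - F Z)) i j @[t --> (0:R)^'+] --> D i j.

(* SDP data: As : 'I_m -> 'M_n are A_1..A_m *)
Definition Aop (As : 'I_m -> 'M[R]_n) (X : 'M[R]_n) : 'cV[R]_m :=
  \col_i mxdot (As i) X.
Definition Aadj (As : 'I_m -> 'M[R]_n) (y : 'cV[R]_m) : 'M[R]_n :=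
  \sum_i y i 0 *: As i.

Definition is_KKT (C : 'M[R]_n) (As : 'I_m -> 'M[R]_n) (b : 'cV[R]_m)
  (X : 'M[R]_n) (y : 'cV[R]_m) (S : 'M[R]_n) : Prop :=
  [/\ Aop As X = b, Aadj As y + S = C, psd X, psd S & mxdot X S = 0].

Definition Xstar C As b : set 'M[R]_n := [set X | exists y S, is_KKT C As b X y S].
Definition Sstar C As b : set 'M[R]_n := [set S | exists X y, is_KKT C As b X y S].

Definition Zstar C As b (tau : R) : set 'M[R]_n :=
  [set Z | exists X S, [/\ Xstar C As b X, Sstar C As b S & Z = X - tau *: S]].

Definition A_surj (As : 'I_m -> 'M[R]_n) : Prop :=
  forall c : 'cV[R]_m, exists X, symmx X /\ Aop As X = c.

Definition strict_compl C As b : Prop :=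
  exists X y S, is_KKT C As b X y S /\ (\rank X + \rank S = n)%N.

Definition gram (As : 'I_m -> 'M[R]_n) : 'M[R]_m :=
  \matrix_(i, j) mxdot (As i) (As j).
Definition Pop (As : 'I_m -> 'M[R]_n) (H : 'M[R]_n) : 'M[R]_n :=
  Aadj As (invmx (gram As) *m Aop As H).
Definition Pperp (As : 'I_m -> 'M[R]_n) (H : 'M[R]_n) : 'M[R]_n := H - Pop As H.

End SDPDefs.

(* Main.v *)
Require Import Defs.
From HB Require Import structures.
From mathcomp Require Import all_boot all_order all_algebra.
From mathcomp Require Import all_classical all_reals all_analysis.
From mathcomp Require Import ring lra.
Import Order.TTheory GRing.Theory Num.Theory.
Import numFieldNormedType.Exports.
Local Open Scope classical_set_scope.
Local Open Scope ring_scope.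

Module Helpers.
Set Implicit Arguments. Unset Strict Implicit. Unset Printing Implicit Defensive.


Section Alg.
Variables (R : realType) (n : nat).
Local Notation M := 'M[R]_n.
Implicit Types A B C : M.

Definition ip (A B : M) : R := \sum_(k : 'I_n * 'I_n) A k.1 k.2 * B k.1 k.2.
Definition quad (A : M) (v : 'I_n -> R) : R :=
  \sum_k \sum_l A k l * (v k * v l).
Definition outer (v : 'I_n -> R) : M := \matrix_(i, j) (v i * v j).

Lemma ip_outer A v : ip A (outer v) = quad A v.
Proof.
rewrite /quad (pair_bigA _ (fun k l => A k l * (v k * v l))).
by apply: eq_bigr => k _; rewrite mxE.
Qed.

Lemma ipC A B : ip A B = ip B A.
Proof. by apply: eq_bigr => k _; rewrite mulrC. Qed.

Lemma ipDl A B C : ip (A + B) C = ip A C + ip B C.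
Proof. by rewrite /ip -big_split; apply: eq_bigr => k _; rewrite mxE mulrDl. Qed.

Lemma ipZl c A B : ip (c *: A) B = c * ip A B.
Proof. by rewrite /ip mulr_sumr; apply: eq_bigr => k _; rewrite mxE mulrA. Qed.

Lemma ipNl A B : ip (- A) B = - ip A B.
Proof. by rewrite -scaleN1r ipZl mulN1r. Qed.

Lemma ipBl A B C : ip (A - B) C = ip A C - ip B C.
Proof. by rewrite ipDl ipNl. Qed.

Lemma ipDr A B C : ip C (A + B) = ip C A + ip C B.
Proof. by rewrite ipC ipDl !(ipC C). Qed.
Lemma ipZr c A B : ip B (c *: A) = c * ip B A.
Proof. by rewrite ipC ipZl ipC. Qed.
Lemma ipNr A B : ip B (- A) = - ip B A.
Proof. by rewrite ipC ipNl ipC. Qed.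
Lemma ipBr A B C : ip C (A - B) = ip C A - ip C B.
Proof. by rewrite ipDr ipNr. Qed.
Lemma ip0l A : ip 0 A = 0.
Proof. by rewrite /ip big1 // => k _; rewrite mxE mul0r. Qed.
Lemma ip0r A : ip A 0 = 0.
Proof. by rewrite ipC ip0l. Qed.

Lemma frob2E A : frob2 A = ip A A.
Proof.
rewrite /frob2 /mxtrace /ip -(pair_bigA _ (fun i j => A i j * A i j)) /= exchange_big /=.
apply: eq_bigr => i _; rewrite mxE; apply: eq_bigr => k _; by rewrite mxE.
Qed.

Lemma ip_self_ge0 A : 0 <= ip A A.
Proof. by apply: sumr_ge0 => k _; rewrite -expr2 sqr_ge0. Qed.

Lemma ip_self_eq0 A : ip A A = 0 -> A = 0.
Proof.
move=> /eqP; rewrite psumr_eq0 => [H|k _]; last by rewrite -expr2 sqr_ge0.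
apply/matrixP => i j; rewrite mxE.
have := allP H (i, j) (mem_index_enum _); rewrite /= -expr2 sqrf_eq0.
by move/eqP.
Qed.

Lemma entry_sq_le A i j : A i j ^+ 2 <= ip A A.
Proof.
rewrite /ip (bigD1 (i, j)) //= -expr2 lerDl.
by apply: sumr_ge0 => k _; rewrite -expr2 sqr_ge0.
Qed.

Lemma quad_mx A (v : 'cV[R]_n) : (v^T *m A *m v) 0 0 = quad A (fun k => v k 0).
Proof.
rewrite /quad mxE.
rewrite exchange_big /=; apply: eq_bigr => l _; rewrite mxE mulr_suml.
by apply: eq_bigr => k _; rewrite mxE; ring.
Qed.

Lemma psd_quadP A : psd A <-> (forall i j, A i j = A j i) /\ forall v, 0 <= quad A v.
Proof.
split.
  case=> hs hq; split.
    by move=> i j; rewrite -[in LHS]hs mxE.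
  move=> v; have := hq (\col_k v k); rewrite quad_mx.
  have -> // : (fun k => (\col_k0 v k0) k 0) = v.
  by apply: funext => k; rewrite mxE.
case=> hs hq; split.
  by apply/matrixP => i j; rewrite mxE hs.
by move=> v; rewrite quad_mx.
Qed.

End Alg.


Lemma small_lemma (R : realType) (a b : R) : 0 <= b ->
  (forall s, 0 < s -> s < 1 -> 2 * s * a <= s ^+ 2 * b) -> a <= 0.
Proof.
move=> b0 H; rewrite leNgt; apply/negP => a0.
pose s := a / (2 * a + b).
have hpos : 0 < 2 * a + b by lra.
have hs : s * (2 * a + b) = a by rewrite /s mulfVK // gt_eqF.
have s0 : 0 < s by rewrite /s divr_gt0.
have s1 : s < 1 by rewrite /s ltr_pdivrMr //; lra.
have := H s s0 s1; nra.
Qed.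

Section Cone.
Variables (R : realType) (n : nat).
Local Notation M := 'M[R]_n.
Implicit Types A B C P Q Y Z : M.
Variable K : set M.
Hypothesis K0 : K 0.
Hypothesis KD : forall A B, K A -> K B -> K (A + B).
Hypothesis KZ : forall c A, 0 <= c -> K A -> K (c *: A).

Lemma frob2_exp A B s : frob2 (A - s *: B) = ip A A - 2 * s * ip A B + s ^+ 2 * ip B B.
Proof.
rewrite frob2E !(ipBl, ipBr, ipZl, ipZr) (ipC B A); ring.
Qed.

Lemma proj_charP Z P : is_proj K Z P <->
  [/\ K P, ip (Z - P) P = 0 & forall Y, K Y -> ip (Z - P) Y <= 0].
Proof.
split.
  case=> KP H.
  have aux : forall D, (forall s, 0 < s -> s < 1 -> K (P + s *: D)) -> ip (Z - P) D <= 0.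
    move=> D KD'; apply: (small_lemma (b := ip D D)); first exact: ip_self_ge0.
    move=> s s0 s1; have := H _ (KD' s s0 s1).
    have -> : Z - (P + s *: D) = (Z - P) - s *: D by rewrite opprD addrA.
    rewrite frob2_exp frob2E; lra.
  have h1 : ip (Z - P) P <= 0.
    apply: aux => s s0 s1; rewrite -{1}(scale1r P) -scalerDl.
    by apply: KZ => //; lra.
  have h2 : ip (Z - P) (- P) <= 0.
    apply: aux => s s0 s1; rewrite scalerN -{1}(scale1r P) -scalerBl.
    by apply: KZ => //; lra.
  split => //.
    by rewrite ipNr in h2; lra.
  move=> Y KY; apply: aux => s s0 s1; apply: KD => //; apply: KZ => //; lra.
case=> KP h0 hY; split => // Y KY.
have -> : Z - Y = (Z - P) - 1 *: (Y - P) by rewrite scale1r opprB addrA subrK.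
rewrite frob2_exp frob2E [ip (Z - P) (Y - P)]ipBr h0.
have := hY _ KY; have := ip_self_ge0 (Y - P); rewrite expr1n; lra.
Qed.

Lemma proj_unique Z P1 P2 : is_proj K Z P1 -> is_proj K Z P2 -> P1 = P2.
Proof.
move=> /proj_charP [K1 e1 h1] /proj_charP [K2 e2 h2].
apply/eqP; rewrite -subr_eq0; apply/eqP/ip_self_eq0.
have := h1 _ K2; have := h2 _ K1; have := ip_self_ge0 (P1 - P2).
rewrite {1 3}(_ : P1 - P2 = (Z - P2) - (Z - P1)); last by apply/matrixP => i j; rewrite !mxE; ring.
move: e1 e2; rewrite !(ipBl, ipBr) (ipC P2 P1); lra.
Qed.

Lemma proj_nonexp Z1 Z2 P1 P2 : is_proj K Z1 P1 -> is_proj K Z2 P2 ->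
  frob2 (P1 - P2) <= frob2 (Z1 - Z2).
Proof.
move=> /proj_charP [K1 e1 h1] /proj_charP [K2 e2 h2].
have := h1 _ K2; have := h2 _ K1.
have hE := ip_self_ge0 ((Z1 - Z2) - (P1 - P2)).
move: e1 e2 hE; rewrite !frob2E !(ipBl, ipBr).
rewrite ?(ipC P2 P1) ?(ipC P1 Z1) ?(ipC P2 Z1) ?(ipC P1 Z2) ?(ipC P2 Z2) ?(ipC Z2 Z1).
lra.
Qed.


End Cone.

Local Close Scope classical_set_scope.


Section SelfDual.
Variables (R : realType) (n : nat).
Local Notation M := 'M[R]_n.
Implicit Types A B C P Q Y Z : M.

Lemma sum_delta (F : 'I_n -> R) i : \sum_l F l * (l == i)%:R = F i.
Proof.
rewrite (bigD1 i) //= eqxx mulr1 big1 ?addr0 // => l /negbTE ->; by rewrite mulr0.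
Qed.

Lemma quad_lin A B c v : quad (A - c *: B) v = quad A v - c * quad B v.
Proof. by rewrite -!ip_outer ipBl ipZl. Qed.

Lemma quad_outer (a v : 'I_n -> R) : quad (outer a) v = (\sum_k a k * v k) ^+ 2.
Proof.
rewrite expr2 mulr_suml /quad; apply: eq_bigr => k _; rewrite mulr_sumr.
by apply: eq_bigr => l _; rewrite mxE; ring.
Qed.

Lemma quad_shift A v i s : (forall k l, A k l = A l k) ->
  quad A (fun k => v k + s * (k == i)%:R) =
  quad A v + 2 * s * (\sum_k A k i * v k) + s ^+ 2 * A i i.
Proof.
move=> hs; set w := fun k => _.
have inner : forall k, \sum_l A k l * (w k * w l) = w k * (\sum_l A k l * v l + s * A k i).
  move=> k; under eq_bigr do rewrite mulrCA.
  rewrite -mulr_sumr; congr (_ * _).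
  under eq_bigr do rewrite /w mulrDr.
  rewrite big_split /=; congr (_ + _).
  under eq_bigr do rewrite mulrCA.
  by rewrite -mulr_sumr sum_delta.
rewrite /quad; under eq_bigr do rewrite inner /w mulrDl.
rewrite big_split /=.
under [X in _ + X = _]eq_bigr do rewrite mulrAC.
rewrite sum_delta.
under eq_bigr do rewrite mulrDr.
rewrite big_split /=.
have e1 : \sum_k v k * (\sum_l A k l * v l) = \sum_k \sum_l A k l * (v k * v l).
  apply: eq_bigr => k _; rewrite mulr_sumr; apply: eq_bigr => l _; ring.
have e2 : \sum_l A i l * v l = \sum_k A k i * v k.
  by apply: eq_bigr => l _; rewrite hs.
have e3 : \sum_k v k * (s * A k i) = s * \sum_k A k i * v k.
  rewrite mulr_sumr; apply: eq_bigr => k _; ring.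
rewrite e1 e2 e3; ring.
Qed.

Lemma quad_delta A j : quad A (fun k => (k == j)%:R) = A j j.
Proof.
rewrite /quad (bigD1 j) //= [X in _ + X]big1 ?addr0.
  rewrite eqxx; under eq_bigr do rewrite mul1r; exact: sum_delta.
move=> k /negbTE ->; rewrite big1 // => l _; by rewrite mul0r mulr0.
Qed.

Lemma psd_diag0 A i j : psd A -> A i i = 0 -> A j i = 0.
Proof.
move=> /psd_quadP [hs hq] hii.
have H : forall s, 0 <= A j j + 2 * s * A j i.
  move=> s; have := hq (fun k => (k == j)%:R + s * (k == i)%:R).
  rewrite quad_shift // quad_delta hii sum_delta; lra.
apply/eqP; apply: contraT => hji.
pose s := - (A j j + 1) / (2 * A j i).
have : 2 * s * A j i = - (A j j + 1) by rewrite /s; field; rewrite hji.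
have := H s; lra.
Qed.

Definition nzd A := [set j | A j j != 0].

Lemma psd_zero_diag A : psd A -> nzd A = finset.set0 -> A = 0.
Proof.
move=> hA h0; apply/matrixP => j i; rewrite mxE.
apply: (psd_diag0 j hA); apply/eqP.
have : i \notin nzd A by rewrite h0 inE.
by rewrite inE negbK.
Qed.

Lemma selfdual_aux k : forall A, (#|nzd A| <= k)%N -> psd A ->
  forall B, psd B -> 0 <= ip A B.
Proof.
elim: k => [|k IH] A hk hA B hB.
  have : nzd A = finset.set0 by apply/eqP; rewrite -cards_eq0 -leqn0.
  by move/(psd_zero_diag hA) ->; rewrite ip0l.
case: (set_0Vmem (nzd A)) => [h0|[i hi]].
  by rewrite (psd_zero_diag hA h0) ip0l.
have hii : A i i != 0 by move: hi; rewrite inE.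
have Aii0 : 0 < A i i.
  rewrite lt_def hii /=; move/psd_quadP: hA => [_ hq].
  by have := hq (fun k => (k == i)%:R); rewrite quad_delta.
pose a := fun k => A k i.
pose c := (A i i)^-1.
pose A' := A - c *: outer a.
have hsA : forall k1 l, A k1 l = A l k1 by move/psd_quadP: hA => [].
have hA' : psd A'.
  apply/psd_quadP; split.
    by move=> k1 l; rewrite !mxE hsA; congr (_ - _ * _); ring.
  move=> v; rewrite quad_lin quad_outer.
  move/psd_quadP: hA => [_ hq].
  set S := \sum_k a k * v k.
  have := hq (fun k => v k + (- c * S) * (k == i)%:R).
  rewrite quad_shift //.
  have -> : \sum_k A k i * v k = S by [].
  have hcA : c * A i i = 1 by rewrite /c mulVf.
  have -> : (- c * S) ^+ 2 * A i i = c * S ^+ 2.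
    by rewrite -[in RHS](mulr1 c) -hcA; ring.
  rewrite expr2; lra.
have hsub : nzd A' \subset nzd A :\ i.
  apply/fintype.subsetP => j; rewrite !inE !mxE /a => hj.
  have hji : j != i.
    apply: contraNneq hj => ->; by rewrite /c mulrA mulVf // mul1r subrr.
  rewrite hji /=; apply: contraNneq hj => hjj.
  have := psd_diag0 i hA hjj; rewrite hsA => ->; by apply/eqP; rewrite hjj; ring.
have hk' : (#|nzd A'| <= k)%N.
  have := subset_leq_card hsub; move: hk; rewrite (cardsD1 i (nzd A)) hi /=.
  by move=> h1 h2; apply: leq_trans h2 _; rewrite -ltnS.
have -> : A = A' + c *: outer a by rewrite /A' subrK.
rewrite ipDl ipZl (ipC (outer a)) ip_outer.
apply: addr_ge0; first exact: IH.
apply: mulr_ge0; first by rewrite /c invr_ge0 ltW.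
by move/psd_quadP: hB => [_ ->].
Qed.

Lemma selfdual A B : psd A -> psd B -> 0 <= ip A B.
Proof. by move=> hA hB; apply: (@selfdual_aux #|nzd A|). Qed.



End SelfDual.

Local Open Scope classical_set_scope.


Section Exist.
Variables (R : realType) (n : nat).
Local Notation M := 'M[R]_n.
Local Notation N := (n * n)%N.
Implicit Types A B C P Q Y Z : M.

Lemma cont_sum (T : topologicalType) (I : Type) (r : seq I) (F : I -> T -> R) :
  (forall i, continuous (F i)) -> continuous (fun x => \sum_(i <- r) F i x).
Proof.
move=> hF; elim: r => [|i r IH].
  by under eq_fun do rewrite big_nil; exact: cst_continuous.
under eq_fun do rewrite big_cons.
by move=> x; apply: continuousD; [exact: hF | exact: IH].
Qed.

Lemma cont_mul (T : topologicalType) (f g : T -> R) :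
  continuous f -> continuous g -> continuous (fun x => f x * g x).
Proof. by move=> hf hg x; apply: continuousM; [exact: hf|exact: hg]. Qed.

Lemma cont_add (T : topologicalType) (f g : T -> R) :
  continuous f -> continuous g -> continuous (fun x => f x + g x).
Proof. by move=> hf hg x; apply: continuousD; [exact: hf|exact: hg]. Qed.

Lemma cont_opp (T : topologicalType) (f : T -> R) :
  continuous f -> continuous (fun x => - f x).
Proof. by move=> hf x; apply: continuousN; exact: hf. Qed.

Lemma vec_mx_entry (v : 'rV[R]_N) i j : vec_mx v i j = v 0 (mxvec_index i j).
Proof. by rewrite -{2}(vec_mxK v) mxvecE. Qed.

Lemma cont_entry i j : continuous (fun v : 'rV[R]_N => vec_mx v i j).
Proof.
under eq_fun do rewrite vec_mx_entry.
exact: coord_continuous.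
Qed.

Lemma cont_quad w : continuous (fun v : 'rV[R]_N => quad (vec_mx v) w).
Proof.
rewrite /quad; apply: cont_sum => k; apply: cont_sum => l.
by apply: cont_mul; [exact: cont_entry | exact: cst_continuous].
Qed.

Lemma cont_frob2 Z : continuous (fun v : 'rV[R]_N => frob2 (Z - vec_mx v)).
Proof.
under eq_fun do rewrite frob2E.
rewrite /ip; apply: cont_sum => p.
have h : continuous (fun v : 'rV[R]_N => (Z - vec_mx v) p.1 p.2).
  under eq_fun do rewrite 2!mxE.
  apply: cont_add; first exact: cst_continuous.
  by apply: cont_opp; exact: cont_entry.
exact: cont_mul.
Qed.

Lemma psd_proj_exists Z : exists P, is_proj (@psd R n) Z P.
Proof.
pose c := 4 * frob2 Z.
have fZ0 : 0 <= frob2 Z by rewrite frob2E ip_self_ge0.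
pose g := fun (p : 'I_n * 'I_n) (v : 'rV[R]_N) => vec_mx v p.1 p.2 - vec_mx v p.2 p.1.
pose Asym := \bigcap_(p in [set: 'I_n * 'I_n]) (g p @^-1` [set 0]).
pose Aq := \bigcap_(w in [set: 'I_n -> R]) ((fun v : 'rV[R]_N => quad (vec_mx v) w) @^-1` [set x | 0 <= x]).
pose Ab := (fun v : 'rV[R]_N => frob2 (vec_mx v)) @^-1` [set x | x <= c].
pose A := Asym `&` Aq `&` Ab.
have memA : forall v, A v <-> psd (vec_mx v) /\ frob2 (vec_mx v) <= c.
  move=> v; split.
    move=> [[hs hq] hb]; split => //; apply/psd_quadP; split.
      move=> i j; have := hs (i, j) I; rewrite /g /= => /eqP; rewrite subr_eq0.
      by move/eqP.
    by move=> w; exact: (hq w I).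
  move=> [/psd_quadP [hs hq] hb]; split => //; split.
    by move=> p _; rewrite /g /= hs subrr.
  by move=> w _; exact: hq.
have clA : closed A.
  apply: closedI; first apply: closedI.
  - apply: closed_bigI => p _; apply: preimage_closed; last exact: closed_eq.
    move=> v _; apply: (@cont_add _ (fun v : 'rV[R]_N => vec_mx v p.1 p.2)).
      exact: cont_entry.
    by apply: cont_opp; exact: cont_entry.
  - apply: closed_bigI => w _; apply: preimage_closed; last exact: closed_ge.
    by move=> v _; exact: cont_quad.
  - apply: preimage_closed; last exact: closed_le.
    move=> v _; have := @cont_frob2 0; under eq_fun do rewrite sub0r.
    have e : forall X : M, frob2 (- X) = frob2 X.
      by move=> X; rewrite !frob2E ipNl ipNr opprK.
    by under eq_fun do rewrite e; apply.
pose box := [set v : 'rV[R]_N | forall k, `[- (c + 1), c + 1]%classic (v 0 k)].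
have cbox : compact box.
  by apply: (@rV_compact _ _ (fun _ => `[- (c + 1), c + 1]%classic)) => k; exact: segment_compact.
have cA : compact A.
  apply: (subclosed_compact clA cbox) => v /memA [_ hb] k.
  case: (mxvec_indexP k) => i j; rewrite -vec_mx_entry /=.
  have := entry_sq_le (vec_mx v) i j; rewrite -frob2E => h.
  have c0 : 0 <= c by rewrite /c; lra.
  rewrite in_itv /=; apply/andP; split; rewrite expr2 in h; nra.
have A0 : A (mxvec (0 : M)).
  apply/memA; rewrite mxvecK; split.
    by apply/psd_quadP; split => [i j|w]; rewrite ?mxE // /quad big1 // => k _; rewrite big1 // => l _; rewrite mxE mul0r.
  by rewrite frob2E ip0l /c; lra.
have [v vA vmin] := compact_EVT_min (ex_intro _ _ A0) cA (continuous_subspaceT (@cont_frob2 Z)).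
move: vA; rewrite in_setE => /memA [vpsd vb].
exists (vec_mx v); split => // Y hY.
have hm0 := vmin _ (mem_set A0); rewrite /= mxvecK subr0 in hm0.
case: (lerP (frob2 Y) c) => hYc.
  have hmY : A (mxvec Y) by apply/memA; rewrite mxvecK.
  by have := vmin _ (mem_set hmY); rewrite /= mxvecK.
apply: (le_trans hm0).
have h1 := frob2_exp Z Y 1.
have h2 := ip_self_ge0 (2 *: Z - Y).
move: h1 h2; rewrite !frob2E !(ipBl, ipBr, ipZl, ipZr) (ipC Y Z) expr1n.
rewrite /c !frob2E in hYc; lra.
Qed.

End Exist.


Section Proj.
Variables (R : realType) (n : nat).
Local Notation M := 'M[R]_n.
Implicit Types A B C P Q Y Z : M.

Lemma quadD A B v : quad (A + B) v = quad A v + quad B v.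
Proof. by rewrite -!ip_outer ipDl. Qed.
Lemma quadZ c A v : quad (c *: A) v = c * quad A v.
Proof. by rewrite -!ip_outer ipZl. Qed.

Lemma psd0 : psd (0 : M).
Proof.
apply/psd_quadP; split => [i j|v]; first by rewrite !mxE.
by rewrite -ip_outer ip0l.
Qed.

Lemma psdD A B : psd A -> psd B -> psd (A + B).
Proof.
move=> /psd_quadP [sA qA] /psd_quadP [sB qB]; apply/psd_quadP; split.
  by move=> i j; rewrite !mxE sA sB.
by move=> v; rewrite quadD addr_ge0.
Qed.

Lemma psdZ c A : 0 <= c -> psd A -> psd (c *: A).
Proof.
move=> c0 /psd_quadP [sA qA]; apply/psd_quadP; split.
  by move=> i j; rewrite !mxE sA.
by move=> v; rewrite quadZ mulr_ge0.
Qed.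

Lemma nsd0 : nsd (0 : M).
Proof. by unfold nsd; rewrite oppr0; exact: psd0. Qed.

Lemma nsdD A B : nsd A -> nsd B -> nsd (A + B).
Proof. by unfold nsd; rewrite opprD; exact: psdD. Qed.

Lemma nsdZ c A : 0 <= c -> nsd A -> nsd (c *: A).
Proof. by unfold nsd; rewrite -scalerN; exact: psdZ. Qed.

Lemma psd_outer (v : 'I_n -> R) : psd (outer v).
Proof.
apply/psd_quadP; split; first by move=> i j; rewrite !mxE mulrC.
by move=> w; rewrite quad_outer sqr_ge0.
Qed.

Lemma nsd_proj_exists Z : exists Q, is_proj (@nsd R n) Z Q.
Proof.
have [P [hP hmin]] := psd_proj_exists (- Z).
exists (- P); split; first by unfold nsd; rewrite opprK.
move=> Y hY; have := hmin _ hY.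
have e : forall X : M, frob2 (- X) = frob2 X.
  by move=> X; rewrite !frob2E ipNl ipNr opprK.
have -> : Z - - P = - (- Z - P) by apply/matrixP => i j; rewrite !mxE; ring.
have -> : Z - Y = - (- Z - - Y) by apply/matrixP => i j; rewrite !mxE; ring.
by rewrite !e.
Qed.

Lemma PiP_spec Z : is_proj (@psd R n) Z (PiP Z).
Proof. by apply: xgetPex; exact: psd_proj_exists. Qed.
Lemma PiN_spec Z : is_proj (@nsd R n) Z (PiN Z).
Proof. by apply: xgetPex; exact: nsd_proj_exists. Qed.

Lemma PiP_eq Z P : is_proj (@psd R n) Z P -> PiP Z = P.
Proof.
move=> h; apply: (proj_unique psdD psdZ (PiP_spec Z) h).
Qed.
Lemma PiN_eq Z P : is_proj (@nsd R n) Z P -> PiN Z = P.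
Proof.
move=> h; apply: (proj_unique nsdD nsdZ (PiN_spec Z) h).
Qed.

Lemma moreau Z : (forall i j, Z i j = Z j i) -> is_proj (@nsd R n) Z (Z - PiP Z).
Proof.
move=> sZ.
have /(proj_charP psdD psdZ) [hP e h] := PiP_spec Z.
apply/(proj_charP nsdD nsdZ); split.
- apply/psd_quadP; split.
    move/psd_quadP: hP => [sP _] i j; by rewrite !mxE sZ sP.
  move=> v; rewrite -ip_outer ipNl oppr_ge0; exact: h (psd_outer v).
- by rewrite opprB addrC subrK ipC.
- move=> Y hY; rewrite opprB addrC subrK.
  have := selfdual hP hY; rewrite ipNr; lra.
Qed.

Lemma PiN_moreau Z : (forall i j, Z i j = Z j i) -> PiN Z = Z - PiP Z.
Proof. by move=> sZ; apply: PiN_eq; exact: moreau. Qed.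

Lemma phiP Y r : (forall i j, Y i j = Y j i) -> 0 <= r ->
  PiP (PiP Y + r *: PiN Y) = PiP Y /\ PiN (PiP Y + r *: PiN Y) = r *: PiN Y.
Proof.
move=> sY r0; rewrite (PiN_moreau sY).
set P := PiP Y.
have /(proj_charP psdD psdZ) [hP e h] := PiP_spec Y.
have /(proj_charP nsdD nsdZ) [hQ eQ hQ'] := moreau sY.
have eW : P + r *: (Y - P) - P = r *: (Y - P) by rewrite addrAC subrr add0r.
have eW2 : P + r *: (Y - P) - r *: (Y - P) = P by rewrite addrK.
have eYQ : Y - (Y - P) = P by rewrite opprB addrC subrK.
split.
  apply: PiP_eq; apply/(proj_charP psdD psdZ); split => //.
  - by rewrite eW ipZl e mulr0.
  - move=> Y' hY'; rewrite eW ipZl; have := h _ hY'; rewrite -/P; nra.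
apply: PiN_eq; apply/(proj_charP nsdD nsdZ); split.
- exact: nsdZ.
- by rewrite eW2 ipZr; move: eQ; rewrite -/P eYQ => ->; rewrite mulr0.
- move=> Y' hY'; rewrite eW2; have := hQ' _ hY'.
  by rewrite -/P eYQ.
Qed.

End Proj.


Section Anal.
Variables (R : realType) (n : nat).
Local Notation M := 'M[R]_n.
Implicit Types A B C P Q Y Z : M.

Lemma cvg_sum0 (T : Type) (F : set_system T) (FF : Filter F) (I : Type) (r : seq I)
  (f : I -> T -> R) : (forall i, f i t @[t --> F] --> 0) ->
  (\sum_(i <- r) f i t) @[t --> F] --> (0 : R).
Proof.
move=> hf; elim: r => [|i r IH].
  under eq_fun do rewrite big_nil; exact: cvg_cst.
under eq_fun do rewrite big_cons.
by have := @cvgD _ _ _ F FF _ _ _ _ (hf i) IH; rewrite addr0.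
Qed.

Lemma sq_small (x s e : R) : 0 < e -> x ^+ 2 <= s -> `|s| < e ^+ 2 -> `|x| < e.
Proof.
move=> e0 h1 h2; have h3 : s < e ^+ 2 by apply: le_lt_trans (ler_norm s) h2.
rewrite !expr2 in h1 h3.
case: (lerP 0 x) => hx; [rewrite ger0_norm // | rewrite ltr0_norm //]; nra.
Qed.

Lemma transfer (F : M -> M) (Z' H' D : M) (V : R -> M) :
  (forall A B, frob2 (F A - F B) <= frob2 (A - B)) ->
  (forall i j, (t^-1 *: (V t - (Z' + t *: H'))) i j @[t --> (0:R)^'+] --> 0) ->
  (forall i j, (t^-1 *: (F (V t) - F Z')) i j @[t --> (0:R)^'+] --> D i j) ->
  is_dirder F Z' H' D.
Proof.
move=> NE h1 h2 i j.
pose a := fun t : R => (t^-1 *: (F (Z' + t *: H') - F (V t))) i j.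
pose E := fun t : R => t^-1 *: (V t - (Z' + t *: H')).
have hs : ip (E t) (E t) @[t --> (0:R)^'+] --> (0:R).
  rewrite /ip; apply: cvg_sum0 => k.
  by have := cvgM (h1 k.1 k.2) (h1 k.1 k.2); rewrite mul0r; apply.
have ha : a t @[t --> (0:R)^'+] --> (0:R).
  apply/cvgr0Pnorm_lt => e e0.
  have := (cvgr0Pnorm_lt _).1 hs (e ^+ 2) (exprn_gt0 2 e0).
  move=> hN; near=> t.
  have ht : `|ip (E t) (E t)| < e ^+ 2 by near: t; exact: hN.
  apply: (sq_small e0 _ ht).
  apply: (le_trans (entry_sq_le _ i j)).
  have hNE := NE (Z' + t *: H') (V t).
  rewrite /E !ipZl !ipZr -!frob2E.
  have -> : frob2 (V t - (Z' + t *: H')) = frob2 (Z' + t *: H' - V t).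
    by rewrite !frob2E -opprB ipNl ipNr opprK.
  by rewrite !mulrA -expr2; apply: ler_wpM2l; [exact: sqr_ge0 | exact: hNE].
have eq : forall t, (t^-1 *: (F (Z' + t *: H') - F Z')) i j =
    a t + (t^-1 *: (F (V t) - F Z')) i j.
  by move=> t; rewrite /a !mxE; ring.
under eq_fun do rewrite eq.
by have := cvgD ha (h2 i j); rewrite add0r; apply.
Unshelve. all: by end_near.
Qed.

End Anal.

End Helpers.
Import Helpers.

Theorem lemma9p1 (R : realType) (n m : nat)
  (C : 'M[R]_n) (As : 'I_m -> 'M[R]_n) (b : 'cV[R]_m)
  (hC : symmx C) (hA : forall i, symmx (As i))
  (A1 : A_surj As) (A2 : strict_compl C As b)
  (sigma sigma' : R) (hs : 0 < sigma) (hs' : 0 < sigma')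
  (Zb Hb DP DN : 'M[R]_n)
  (hZ : Zstar C As b sigma Zb) (hH : symmx Hb)
  (hDP : is_dirder (@PiP R n) Zb Hb DP)
  (hDN : is_dirder (@PiN R n) Zb Hb DN)
  (hcrit : - Pop As DP - Pperp As DN = 0) :
  let Xb := PiP Zb in
  let Sb := - sigma^-1 *: PiN Zb in
  let Zb' := Xb - sigma' *: Sb in
  let Hb' := DP + (sigma' / sigma) *: DN in
  is_dirder (@PiP R n) Zb' Hb' DP /\
  is_dirder (@PiN R n) Zb' Hb' ((sigma' / sigma) *: DN).
Proof.
move=> Xb Sb Zb' Hb'.
set r := sigma' / sigma.
have r0 : 0 <= r by rewrite /r ltW // divr_gt0.
have symZ : forall i j, Zb i j = Zb j i.
  case: hZ => X [S [[y [S' [_ _ hX _ _]]] [X' [y' [_ _ _ hS _]]] ->]] i j.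
  move/psd_quadP: hX => [sX _]; move/psd_quadP: hS => [sS _].
  by rewrite !mxE sX sS.
have symH : forall i j, Hb i j = Hb j i by move=> i j; rewrite -[in LHS]hH mxE.
pose Y := fun t : R => Zb + t *: Hb.
have symY : forall t i j, Y t i j = Y t j i by move=> t i j; rewrite !mxE symZ symH.
pose V := fun t : R => PiP (Y t) + r *: PiN (Y t).
have eZ' : Zb' = PiP Zb + r *: PiN Zb.
  rewrite /Zb' /Sb /Xb /r; apply/matrixP => i j; rewrite !mxE; field.
  by rewrite gt_eqF.
have [pP0 pN0] := phiP symZ r0.
have hV : forall t, PiP (V t) = PiP (Y t) /\ PiN (V t) = r *: PiN (Y t).
  by move=> t; exact: phiP (symY t) r0.
have h1 : forall i j, (t^-1 *: (V t - (Zb' + t *: Hb'))) i j @[t --> (0:R)^'+] --> (0:R).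
  move=> i j.
  have E : {near (0:R)^'+, (fun t => ((t^-1 *: (PiP (Y t) - PiP Zb)) i j - DP i j) +
       r * ((t^-1 *: (PiN (Y t) - PiN Zb)) i j - DN i j)) =1
      (fun t => (t^-1 *: (V t - (Zb' + t *: Hb'))) i j)}.
    near=> t.
    have t0 : t != 0 by apply: lt0r_neq0; near: t; exact: nbhs_right_gt.
    have s0 : sigma != 0 by rewrite gt_eqF.
    rewrite /V eZ' /Hb' /r !mxE; field; by rewrite s0 t0.
  apply: cvg_trans (near_eq_cvg E) _.
  suff : (fun t => ((t^-1 *: (PiP (Y t) - PiP Zb)) i j - DP i j) +
       r * ((t^-1 *: (PiN (Y t) - PiN Zb)) i j - DN i j)) @ (0:R)^'+ -->
      (DP i j - DP i j) + r * (DN i j - DN i j).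
    by rewrite !subrr mulr0 addr0.
  apply: cvgD; first by apply: cvgB; [exact: hDP | exact: cvg_cst].
  apply: cvgM; first exact: cvg_cst.
  by apply: cvgB; [exact: hDN | exact: cvg_cst].
have NEP : forall A B : 'M[R]_n, frob2 (PiP A - PiP B) <= frob2 (A - B).
  by move=> A B; apply: (proj_nonexp (@psdD R n) (@psdZ R n)); exact: PiP_spec.
have NEN : forall A B : 'M[R]_n, frob2 (PiN A - PiN B) <= frob2 (A - B).
  by move=> A B; apply: (proj_nonexp (@nsdD R n) (@nsdZ R n)); exact: PiN_spec.
split.
  apply: (transfer NEP h1) => i j.
  have -> : (fun t => (t^-1 *: (PiP (V t) - PiP Zb')) i j) =
      (fun t => (t^-1 *: (PiP (Zb + t *: Hb) - PiP Zb)) i j).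
    by apply: funext => t; rewrite (hV t).1 eZ' pP0.
  exact: hDP.
apply: (transfer NEN h1) => i j.
have -> : (fun t => (t^-1 *: (PiN (V t) - PiN Zb')) i j) =
    (fun t => r * (t^-1 *: (PiN (Zb + t *: Hb) - PiN Zb)) i j).
  by apply: funext => t; rewrite (hV t).2 eZ' pN0 !mxE; ring.
rewrite mxE; apply: cvgM; [exact: cvg_cst | exact: hDN].
Unshelve. all: by end_near.
Qed.
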